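(* Consider the system $S'=1-IS-S$, $I'=IS-I$ on $\mathbb R^2$. For $c\in[0,1)$ let $\Gamma_c=\{(S,I)\in\mathbb R^2: S\ge0,\ I\ge0,\ S+I\le1-c\}$. Then for every $c\in(0,1)$ the system has the conditional Lipschitz shadowing property in $\Gamma_c$, but it does not have the conditional Lipschitz shadowing property in $\Gamma_0$.
   Context: For continuous $g\colon[0,\infty)\times\mathbb R^n\to\mathbb R^n$ and $\tau\in(0,\infty]$, a pseudosolution of $x'=g(t,x)$ on $[0,\tau)$ is a $C^1$ map $y\colon[0,\tau)\to\mathbb R^n$ with $\sigma_y:=\sup_{0\le t<\tau}|y'(t)-g(t,y(t))|<\infty$ (for a fixed norm $|\cdot|$ on $\mathbb R^n$; the property below does not depend on the norm). The equation has the conditional Lipschitz shadowing property in $H\neq\emptyset$ if there exist $\varepsilon_0,\kappa>0$ such that whenever $0<\varepsilon\le\varepsilon_0$ and $y$ is a pseudosolution on $[0,\tau)$ ($\tau\in(0,\infty]$) with $\sigma_y\le\varepsilon$ and $y(t)\in H$ for all $t\in[0,\tau)$, there is a solution $x$ of the equation defined on $[0,\tau)$ with $\sup_{0\le t<\tau}|x(t)-y(t)|\le\kappa\varepsilon$. *)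

(* Defs.v *)
From Stdlib Require Import Reals Lra.
Open Scope R_scope.

(* Time horizon tau in (0, +oo]: [Some T] is a finite T, [None] is +oo. *)
Definition horizon_pos (tau : option R) : Prop :=
  match tau with Some T => 0 < T | None => True end.

Definition in_dom (tau : option R) (t : R) : Prop :=
  0 <= t /\ match tau with Some T => t < T | None => True end.

(* f has derivative f' at every point of D, relative to D
   (one-sided at the endpoint 0 of [0,tau)). *)
Definition has_deriv_on (D : R -> Prop) (f f' : R -> R) : Prop :=
  forall t, D t -> forall eps, 0 < eps -> exists delta, 0 < delta /\
    forall s, D s -> Rabs (s - t) < delta ->
      Rabs (f s - f t - f' t * (s - t)) <= eps * Rabs (s - t).

Definition cont_on (D : R -> Prop) (f : R -> R) : Prop :=
  forall t, D t -> forall eps, 0 < eps -> exists delta, 0 < delta /\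
    forall s, D s -> Rabs (s - t) < delta -> Rabs (f s - f t) < eps.

(* A fixed norm on R^2 (max norm); the shadowing property is norm-independent. *)
Definition norm2 (v : R * R) : R := Rmax (Rabs (fst v)) (Rabs (snd v)).
Definition sub2 (u v : R * R) : R * R := (fst u - fst v, snd u - snd v).

Definition C1_with_deriv (tau : option R) (y y' : R -> R * R) : Prop :=
  has_deriv_on (in_dom tau) (fun t => fst (y t)) (fun t => fst (y' t)) /\
  has_deriv_on (in_dom tau) (fun t => snd (y t)) (fun t => snd (y' t)) /\
  cont_on (in_dom tau) (fun t => fst (y' t)) /\
  cont_on (in_dom tau) (fun t => snd (y' t)).

Definition pseudosolution_le (g : R -> R * R -> R * R) (tau : option R)
    (y : R -> R * R) (eps : R) : Prop :=
  exists y' : R -> R * R, C1_with_deriv tau y y' /\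
    forall t, in_dom tau t -> norm2 (sub2 (y' t) (g t (y t))) <= eps.

Definition is_solution (g : R -> R * R -> R * R) (tau : option R)
    (x : R -> R * R) : Prop :=
  has_deriv_on (in_dom tau) (fun t => fst (x t)) (fun t => fst (g t (x t))) /\
  has_deriv_on (in_dom tau) (fun t => snd (x t)) (fun t => snd (g t (x t))).

Definition cond_lip_shadowing (g : R -> R * R -> R * R) (H : R * R -> Prop) : Prop :=
  exists eps0 kappa, 0 < eps0 /\ 0 < kappa /\
    forall eps, 0 < eps -> eps <= eps0 ->
    forall (tau : option R) (y : R -> R * R),
      horizon_pos tau ->
      pseudosolution_le g tau y eps ->
      (forall t, in_dom tau t -> H (y t)) ->
      exists x : R -> R * R, is_solution g tau x /\
        forall t, in_dom tau t -> norm2 (sub2 (x t) (y t)) <= kappa * eps.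

Definition sir_field (t : R) (p : R * R) : R * R :=
  let S := fst p in let I := snd p in (1 - I * S - S, I * S - I).

Definition Gamma (c : R) (p : R * R) : Prop :=
  0 <= fst p /\ 0 <= snd p /\ fst p + snd p <= 1 - c.

(* Main.v *)
Require Import Defs.
From Stdlib Require Import Reals Lra Classical.
From Coquelicot Require Import Coquelicot.
Open Scope R_scope.

Ltac rabs := repeat match goal with
  | H : context [Rabs ?x] |- _ => revert H end;
  repeat match goal with |- context [Rabs ?x] => unfold Rabs at 1; destruct (Rcase_abs x) end;
  intros.

Lemma in_dom_le tau t s : in_dom tau t -> 0 <= s <= t -> in_dom tau s.
Proof. unfold in_dom; destruct tau; intros [? ?] ?; split; lra. Qed.

Lemma deriv_cont D f f' : has_deriv_on D f f' -> cont_on D f.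
Proof.
intros Hd t Dt e He. destruct (Hd t Dt 1 Rlt_0_1) as [d [Hd0 Hdd]].
assert (HA : 0 <= Rabs (f' t)) by apply Rabs_pos.
set (A := Rabs (f' t)) in *.
exists (Rmin d (e / (A + 2))). split.
{ apply Rmin_glb_lt; auto. apply Rdiv_lt_0_compat; lra. }
intros s Ds Hs.
assert (H1 : Rabs (s - t) < d) by (eapply Rlt_le_trans; [exact Hs| apply Rmin_l]).
assert (H2 : Rabs (s - t) < e / (A + 2)) by (eapply Rlt_le_trans; [exact Hs| apply Rmin_r]).
specialize (Hdd s Ds H1).
assert (H3 : Rabs (f' t * (s - t)) = A * Rabs (s - t)) by (rewrite Rabs_mult; reflexivity).
assert (H4 : Rabs (f s - f t) <= Rabs (f s - f t - f' t * (s - t)) + Rabs (f' t * (s - t))).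
{ replace (f s - f t) with ((f s - f t - f' t * (s - t)) + f' t * (s - t)) at 1 by ring.
  apply Rabs_triang. }
assert (H5 : Rabs (s - t) * (A + 2) < e).
{ apply (Rmult_lt_compat_r (A + 2)) in H2; [|lra].
  unfold Rdiv in H2. rewrite Rmult_assoc, Rinv_l in H2; lra. }
assert (0 <= Rabs (s - t)) by apply Rabs_pos.
nra.
Qed.

Lemma hd_plus D f f' g g' : has_deriv_on D f f' -> has_deriv_on D g g' ->
  has_deriv_on D (fun t => f t + g t) (fun t => f' t + g' t).
Proof.
intros Hf Hg t Dt e He.
destruct (Hf t Dt (e/2)) as [d1 [? H1]]; [lra|].
destruct (Hg t Dt (e/2)) as [d2 [? H2]]; [lra|].
exists (Rmin d1 d2). split; [apply Rmin_glb_lt; auto|].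
intros s Ds Hs.
specialize (H1 s Ds (Rlt_le_trans _ _ _ Hs (Rmin_l _ _))).
specialize (H2 s Ds (Rlt_le_trans _ _ _ Hs (Rmin_r _ _))).
replace (f s + g s - (f t + g t) - (f' t + g' t) * (s - t)) with
  ((f s - f t - f' t * (s - t)) + (g s - g t - g' t * (s - t))) by ring.
eapply Rle_trans; [apply Rabs_triang|]. lra.
Qed.

Lemma hd_scal D f f' a : has_deriv_on D f f' ->
  has_deriv_on D (fun t => a * f t) (fun t => a * f' t).
Proof.
intros Hf t Dt e He.
destruct (Hf t Dt (e / (Rabs a + 1))) as [d [? H1]].
{ apply Rdiv_lt_0_compat; [lra|]. pose proof (Rabs_pos a); lra. }
exists d; split; auto. intros s Ds Hs. specialize (H1 s Ds Hs).
replace (a * f s - a * f t - a * f' t * (s - t)) with (a * (f s - f t - f' t * (s - t))) by ring.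
rewrite Rabs_mult.
assert (0 <= Rabs a) by apply Rabs_pos.
assert (0 <= Rabs (s - t)) by apply Rabs_pos.
assert (Hq : e / (Rabs a + 1) * (Rabs a + 1) = e) by (field; lra).
assert (0 <= e / (Rabs a + 1)) by (apply Rlt_le, Rdiv_lt_0_compat; lra).
assert (0 <= Rabs (f s - f t - f' t * (s - t))) by apply Rabs_pos.
nra.
Qed.

Lemma hd_minus D f f' g g' : has_deriv_on D f f' -> has_deriv_on D g g' ->
  has_deriv_on D (fun t => f t - g t) (fun t => f' t - g' t).
Proof.
intros Hf Hg.
pose proof (hd_plus D f f' _ _ Hf (hd_scal D g g' (-1) Hg)) as H.
intros t Dt e He. destruct (H t Dt e He) as [d [? Hd]]. exists d; split; auto.
intros s Ds Hs. specialize (Hd s Ds Hs).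
replace (f s - g s - (f t - g t) - (f' t - g' t) * (s - t)) with
  (f s + -1 * g s - (f t + -1 * g t) - (f' t + -1 * g' t) * (s - t)) by ring. auto.
Qed.

Lemma hd_id D : has_deriv_on D (fun t => t) (fun _ => 1).
Proof.
intros t Dt e He. exists 1; split; [lra|]. intros s _ _.
replace (s - t - 1 * (s - t)) with 0 by ring. rewrite Rabs_R0.
pose proof (Rabs_pos (s - t)); nra.
Qed.

Lemma hit1 tau h h' b : has_deriv_on (in_dom tau) h h' -> h 0 < b ->
  (forall t, in_dom tau t -> b <= h t -> h' t < 0) ->
  forall t, in_dom tau t -> h t < b.
Proof.
intros Hd H0 Hneg t1 Ht1.
destruct (Rlt_or_le (h t1) b) as [|Hge]; auto. exfalso.
pose proof (deriv_cont _ _ _ Hd) as Hc.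
assert (Ht10 : 0 <= t1) by (destruct Ht1; auto).
set (E := fun s => 0 <= s <= t1 /\ forall u, 0 <= u <= s -> h u < b).
destruct (completeness E) as [s0 [Hub Hlub]].
{ exists t1. intros s [[_ ?] _]; auto. }
{ exists 0. split; [lra|]. intros u Hu. replace u with 0 by lra; auto. }
assert (E0 : E 0). { split; [lra|]. intros u Hu. replace u with 0 by lra; auto. }
assert (Hs00 : 0 <= s0) by (apply Hub; auto).
assert (Hs01 : s0 <= t1) by (apply Hlub; intros s [[_ ?] _]; auto).
assert (Hbefore : forall u, 0 <= u < s0 -> h u < b).
{ intros u Hu.
  assert (~ is_upper_bound E u) by (intro Hu2; specialize (Hlub u Hu2); lra).
  apply not_all_ex_not in H. destruct H as [s Hs].
  apply imply_to_and in Hs. destruct Hs as [[_ Hs1] Hs2].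
  apply Hs1. lra. }
assert (Ds0 : in_dom tau s0) by (apply (in_dom_le tau t1); auto).
assert (Hs0 : b <= h s0).
{ destruct (Rlt_or_le (h s0) b) as [Hlt|]; auto. exfalso.
  assert (s0 < t1) by (destruct (Req_dec s0 t1); [subst; lra | lra]).
  destruct (Hc s0 Ds0 (b - h s0)) as [d [Hd0 Hdd]]; [lra|].
  set (s' := Rmin (s0 + d/2) t1).
  assert (s0 < s') by (unfold s'; apply Rmin_glb_lt; lra).
  assert (s' <= t1) by apply Rmin_r.
  assert (s' <= s0 + d/2) by apply Rmin_l.
  assert (E s').
  { split; [lra|]. intros u Hu.
    destruct (Rlt_or_le u s0). apply Hbefore; lra.
    assert (Rabs (u - s0) < d) by (rabs; lra).
    specialize (Hdd u (in_dom_le tau t1 u Ht1 ltac:(lra)) H5). rabs; lra. }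
  specialize (Hub s' H4). lra. }
assert (Hpos : 0 < s0) by (destruct (Req_dec s0 0); [subst; lra| lra]).
specialize (Hneg s0 Ds0 Hs0).
destruct (Hd s0 Ds0 (- h' s0 / 2)) as [d [Hd0 Hdd]]; [lra|].
set (k := Rmin d s0 / 2).
assert (0 < Rmin d s0) by (apply Rmin_glb_lt; lra).
assert (0 < k) by (unfold k; lra).
assert (k < d) by (unfold k; pose proof (Rmin_l d s0); lra).
assert (k <= s0 / 2) by (unfold k; pose proof (Rmin_r d s0); lra).
assert (Hs : in_dom tau (s0 - k)) by (apply (in_dom_le tau s0); auto; lra).
assert (Rabs (s0 - k - s0) < d) by (rabs; lra).
specialize (Hdd _ Hs H4).
assert (h (s0 - k) < b) by (apply Hbefore; lra).
replace (s0 - k - s0) with (- k) in Hdd by ring.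
rabs; nra.
Qed.
Lemma is_derive_hd (D : R -> Prop) f f' :
  (forall t, D t -> is_derive f t (f' t)) -> has_deriv_on D f f'.
Proof.
intros H t Dt eps He.
specialize (H t Dt). apply is_derive_Reals in H.
destruct (H eps He) as [delta Hd].
exists delta; split; [apply cond_pos|].
intros s _ Hs.
destruct (Req_dec s t) as [->|Hst].
{ replace (f t - f t - f' t * (t - t)) with 0 by ring. rewrite Rabs_R0.
  replace (t - t) with 0 by ring; rewrite Rabs_R0; lra. }
assert (Hh : s - t <> 0) by lra.
specialize (Hd (s - t) Hh Hs).
replace (t + (s - t)) with s in Hd by ring.
replace (f s - f t - f' t * (s - t)) with ((s - t) * ((f s - f t) / (s - t) - f' t))
  by (field; auto).
rewrite Rabs_mult. rewrite Rmult_comm. apply Rmult_le_compat_r.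
apply Rabs_pos. lra.
Qed.

Definition Nx (N0 t : R) := 1 + (N0 - 1) * exp (- t).
Definition Ea (N0 t : R) := exp ((N0 - 1) * (1 - exp (- t))).
Definition Ix (N0 I0 t : R) := I0 * Ea N0 t / (1 + I0 * RInt (Ea N0) 0 t).

Lemma Ea_der N0 t : is_derive (Ea N0) t ((N0 - 1) * exp (- t) * Ea N0 t).
Proof. unfold Ea. auto_derive; auto.
replace (1 + - exp (- t)) with (1 - exp (- t)) by ring. ring. Qed.

Lemma Ea_cont N0 t : continuous (Ea N0) t.
Proof. apply (@ex_derive_continuous R_AbsRing R_NormedModule). eexists; apply Ea_der. Qed.

Lemma Ea_pos N0 t : 0 < Ea N0 t.
Proof. apply exp_pos. Qed.

Lemma Int_der N0 t : is_derive (fun b => RInt (Ea N0) 0 b) t (Ea N0 t).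
Proof.
apply is_derive_RInt with (a := 0).
- apply filter_forall. intros b. apply RInt_correct.
  apply (@ex_RInt_continuous R_CompleteNormedModule). intros; apply Ea_cont.
- apply Ea_cont.
Qed.

Lemma Int_ge0 N0 t : 0 <= t -> 0 <= RInt (Ea N0) 0 t.
Proof.
intros Ht. apply RInt_ge_0; auto.
apply (@ex_RInt_continuous R_CompleteNormedModule). intros; apply Ea_cont.
intros; left; apply Ea_pos.
Qed.

Lemma Nx_der N0 t : is_derive (Nx N0) t (1 - Nx N0 t).
Proof. unfold Nx. auto_derive; auto. ring. Qed.

Lemma Ix_der N0 I0 t : 0 <= I0 -> 0 <= t ->
  is_derive (Ix N0 I0) t (Ix N0 I0 t * (Nx N0 t - 1 - Ix N0 I0 t)).
Proof.
intros HI Ht.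
pose proof (Int_ge0 N0 t Ht) as Hi.
assert (Hden : 1 + I0 * RInt (Ea N0) 0 t <> 0) by nra.
unfold Ix.
evar (l : R).
assert (Hd : is_derive (fun s => I0 * Ea N0 s / (1 + I0 * RInt (Ea N0) 0 s)) t l).
{ apply is_derive_div; auto.
  - apply (is_derive_scal (Ea N0)). apply Ea_der.
  - apply @is_derive_plus. apply is_derive_const.
    apply (is_derive_scal (fun b => RInt (Ea N0) 0 b)). apply Int_der. }
match goal with |- is_derive _ _ ?r => replace r with l end.
exact Hd.
subst l. simpl. rewrite plus_zero_l. unfold Nx. field. auto.
Qed.

Lemma hit2 tau d d' b : has_deriv_on (in_dom tau) d d' -> Rabs (d 0) < b ->
  (forall t, in_dom tau t -> b <= d t -> d' t < 0) ->
  (forall t, in_dom tau t -> d t <= - b -> 0 < d' t) ->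
  forall t, in_dom tau t -> Rabs (d t) < b.
Proof.
intros Hd H0 Hp Hn t Ht.
assert (A1 : d t < b).
{ apply (hit1 tau d d' b Hd); auto. rabs; lra. }
assert (A2 : -1 * d t < b).
{ apply (hit1 tau (fun t => -1 * d t) (fun t => -1 * d' t) b); auto.
  apply hd_scal; auto. rabs; lra.
  intros s Hs Hb. specialize (Hn s Hs ltac:(lra)). lra. }
rabs; lra.
Qed.

Lemma hd_const D a : has_deriv_on D (fun _ => a) (fun _ => 0).
Proof.
intros t Dt e He. exists 1; split; [lra|]. intros s _ _.
replace (a - a - 0 * (s - t)) with 0 by ring. rewrite Rabs_R0.
pose proof (Rabs_pos (s - t)); nra.
Qed.

Lemma cont_const D a : cont_on D (fun _ => a).
Proof.
intros t Dt e He. exists 1; split; [lra|]. intros s _ _.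
replace (a - a) with 0 by ring. rewrite Rabs_R0. lra.
Qed.

Lemma negative_part : ~ cond_lip_shadowing sir_field (Gamma 0).
Proof.
intros [eps0 [k [He0 [Hk H]]]].
set (r := Rmin (1/2) (Rmin (/ (8 * k)) eps0)).
assert (Hr1 : r <= 1/2) by apply Rmin_l.
assert (Hr2 : r <= / (8 * k)) by (eapply Rle_trans; [apply Rmin_r| apply Rmin_l]).
assert (Hr3 : r <= eps0) by (eapply Rle_trans; [apply Rmin_r| apply Rmin_r]).
assert (Hr0 : 0 < r).
{ unfold r. apply Rmin_glb_lt; [lra|]. apply Rmin_glb_lt; auto.
  apply Rinv_0_lt_compat; lra. }
assert (Hkr : k * r <= 1/8).
{ apply (Rmult_le_compat_l (8 * k)) in Hr2; [|lra].
  rewrite Rinv_r in Hr2; lra. }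
destruct (H (r * r) ltac:(nra) ltac:(nra) None (fun _ => (1 - r, r)) I)
  as [x [[Hx1 Hx2] Hclose]].
{ exists (fun _ => (0, 0)). split.
  - split; [|split; [|split]]; simpl; first [apply hd_const | apply cont_const].
  - intros t _. unfold norm2, sub2, sir_field; simpl.
    apply Rmax_lub; rabs; nra. }
{ intros t _. unfold Gamma; simpl. lra. }
set (q := k * (r * r)).
assert (Hq : q <= r / 8) by (unfold q; nra).
assert (Hq0 : 0 <= q) by (unfold q; nra).
assert (HB : forall t, 0 <= t ->
  Rabs (fst (x t) - (1 - r)) <= q /\ Rabs (snd (x t) - r) <= q).
{ intros t Ht. specialize (Hclose t (conj Ht I)). unfold norm2, sub2 in Hclose; simpl in Hclose.
  split; eapply Rle_trans; [apply Rmax_l| exact Hclose| apply Rmax_r| exact Hclose]. }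
set (m := r * r / 4).
pose proof (hd_plus _ _ _ _ _ Hx2 (hd_scal _ _ _ m (hd_id (in_dom None)))) as Hh.
simpl in Hh.
assert (Hneg := hit1 None _ _ (snd (x 0) + m) Hh).
set (T := 2 + / r).
assert (HT : 0 <= T) by (unfold T; pose proof (Rinv_0_lt_compat r Hr0); lra).
specialize (Hneg ltac:(unfold m; nra)).
assert (Hx : forall t, in_dom None t ->
   snd (sir_field t (x t)) + m * 1 < 0).
{ intros t [Ht _]. destruct (HB t Ht) as [B1 B2]. unfold sir_field; simpl.
  set (S := fst (x t)) in *. set (Iv := snd (x t)) in *.
  assert (S - 1 <= - 7 * r / 8) by (rabs; lra).
  assert (7 * r / 8 <= Iv) by (rabs; lra).
  unfold m. nra. }
specialize (Hneg (fun t Ht _ => Hx t Ht) T (conj HT I)).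
destruct (HB 0 ltac:(lra)) as [_ B0]. destruct (HB T HT) as [_ BT].
assert (HrT : r * T = 2 * r + 1) by (unfold T; field; lra).
unfold m in Hneg. rabs; nra.
Qed.

Definition Xs (N0 I0 t : R) : R * R := (Nx N0 t - Ix N0 I0 t, Ix N0 I0 t).

Lemma exp_mono x y : x <= y -> exp x <= exp y.
Proof. intros [H|H]; [left; apply exp_increasing; auto| subst; lra]. Qed.

Lemma Ix_bounds N0 I0 t : 0 <= I0 -> N0 <= 1 -> 0 <= t ->
  0 <= Ix N0 I0 t <= I0.
Proof.
intros HI HN Ht. unfold Ix.
pose proof (Int_ge0 N0 t Ht) as Hi.
pose proof (Ea_pos N0 t) as He.
assert (He1 : Ea N0 t <= 1).
{ unfold Ea. apply Rle_trans with (exp 0); [|rewrite exp_0; lra]. apply exp_mono.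
  assert (exp (- t) <= 1) by (apply Rle_trans with (exp 0); [apply exp_mono; lra|rewrite exp_0; lra]).
  pose proof (exp_pos (- t)). nra. }
assert (Hd : 1 <= 1 + I0 * RInt (Ea N0) 0 t) by nra.
split.
- apply Rle_mult_inv_pos; nra.
- apply (Rmult_le_reg_r (1 + I0 * RInt (Ea N0) 0 t)); [lra|].
  unfold Rdiv. rewrite Rmult_assoc, Rinv_l by lra. nra.
Qed.

Lemma Xs_sol N0 I0 tau : 0 <= I0 -> is_solution sir_field tau (Xs N0 I0).
Proof.
intros HI. split.
- apply is_derive_hd. intros t [Ht _]. unfold Xs, sir_field; simpl.
  pose proof (Ix_der N0 I0 t HI Ht) as H2.
  pose proof (@is_derive_minus R_AbsRing R_NormedModule _ _ t _ _ (Nx_der N0 t) H2) as H.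
  match goal with |- is_derive _ _ ?r => replace r with
    (minus (1 - Nx N0 t) (Ix N0 I0 t * (Nx N0 t - 1 - Ix N0 I0 t))) end.
  exact H.
  unfold minus, plus, opp; simpl. ring.
- apply is_derive_hd. intros t [Ht _]. unfold Xs, sir_field; simpl.
  match goal with |- is_derive _ _ ?r => replace r with
    (Ix N0 I0 t * (Nx N0 t - 1 - Ix N0 I0 t)) by ring end.
  apply Ix_der; auto.
Qed.

Lemma positive_part c : 0 < c < 1 -> cond_lip_shadowing sir_field (Gamma c).
Proof.
intros Hc.
exists 1, (3 + 5 / c). split; [lra|]. split.
{ assert (0 < 5 / c) by (apply Rdiv_lt_0_compat; lra). lra. }
intros eps He _ tau y Htau [y' [[Hd1 [Hd2 _]] Hb]] HG.
assert (D0 : in_dom tau 0) by (unfold in_dom; destruct tau; simpl in *; split; lra).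
set (S0 := fst (y 0)). set (I0 := snd (y 0)). set (N0 := S0 + I0).
destruct (HG 0 D0) as [HS0 [HI0 HN0]]. fold S0 I0 in HS0, HI0, HN0.
assert (HN1 : N0 <= 1) by (unfold N0; lra).
exists (Xs N0 I0). split; [apply Xs_sol; auto|].
assert (He12 : forall t, in_dom tau t ->
  Rabs (fst (y' t) - (1 - snd (y t) * fst (y t) - fst (y t))) <= eps /\
  Rabs (snd (y' t) - (snd (y t) * fst (y t) - snd (y t))) <= eps).
{ intros t Ht. specialize (Hb t Ht). unfold norm2, sub2, sir_field in Hb; simpl in Hb.
  split; eapply Rle_trans; [apply Rmax_l| exact Hb| apply Rmax_r| exact Hb]. }
pose proof (hd_minus _ _ _ _ _ (hd_plus _ _ _ _ _ Hd1 Hd2)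
   (is_derive_hd (in_dom tau) (Nx N0) (fun t => 1 - Nx N0 t) (fun t _ => Nx_der N0 t))) as HdN.
assert (HN : forall t, in_dom tau t -> Rabs (fst (y t) + snd (y t) - Nx N0 t) < 3 * eps).
{ apply (hit2 tau _ _ _ HdN).
  - unfold Nx. rewrite Ropp_0, exp_0. fold S0 I0 N0.
    replace (N0 - (1 + (N0 - 1) * 1)) with 0 by ring. rewrite Rabs_R0; lra.
  - intros t Ht Hge. destruct (He12 t Ht) as [E1 E2]. rabs; lra.
  - intros t Ht Hge. destruct (He12 t Ht) as [E1 E2]. rabs; lra. }
pose proof (hd_minus _ _ _ _ _ Hd2
   (is_derive_hd (in_dom tau) (Ix N0 I0) (fun t => Ix N0 I0 t * (Nx N0 t - 1 - Ix N0 I0 t))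
      (fun t Ht => Ix_der N0 I0 t HI0 (proj1 Ht)))) as HdI.
assert (Hb5 : 0 < 5 * eps / c) by (apply Rdiv_lt_0_compat; lra).
assert (Hcb : c * (5 * eps / c) = 5 * eps) by (field; lra).
assert (HI : forall t, in_dom tau t -> Rabs (snd (y t) - Ix N0 I0 t) < 5 * eps / c).
{ apply (hit2 tau _ _ _ HdI).
  - unfold Ix. rewrite RInt_point. unfold Ea. rewrite Ropp_0, exp_0.
    replace (1 - 1) with 0 by ring. rewrite Rmult_0_r, exp_0. fold I0.
    unfold zero; simpl. replace (I0 - I0 * 1 / (1 + I0 * 0)) with 0 by field.
    rewrite Rabs_R0; lra.
  - intros t Ht Hge. destruct (He12 t Ht) as [E1 E2].
    destruct (HG t Ht) as [G1 [G2 G3]].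
    destruct (Ix_bounds N0 I0 t HI0 ltac:(lra) (proj1 Ht)) as [B1 B2].
    specialize (HN t Ht).
    set (Sy := fst (y t)) in *. set (Iy := snd (y t)) in *.
    set (Ixx := Ix N0 I0 t) in *. set (Nxx := Nx N0 t) in *.
    set (dN := Sy + Iy - Nxx) in *.
    assert (Heq : snd (y' t) - Ixx * (Nxx - 1 - Ixx) =
      (snd (y' t) - (Iy * Sy - Iy)) + (Iy - Ixx) * (Sy + Iy - 1 - Iy - Ixx) + Ixx * dN)
      by (unfold dN; ring).
    rewrite Heq.
    assert (Hk : Sy + Iy - 1 - Iy - Ixx <= - c) by lra.
    assert (H1 : (Iy - Ixx) * (Sy + Iy - 1 - Iy - Ixx) <= (Iy - Ixx) * (- c))
      by (apply Rmult_le_compat_l; lra).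
    assert (H2 : c * (5 * eps / c) <= c * (Iy - Ixx)) by (apply Rmult_le_compat_l; lra).
    assert (HdNb : dN < 3 * eps) by (rabs; lra).
    assert (H3 : Ixx * dN <= Ixx * (3 * eps)) by (apply Rmult_le_compat_l; lra).
    assert (H4 : Ixx * (3 * eps) <= 1 * (3 * eps)) by (apply Rmult_le_compat_r; lra).
    assert (E2' : snd (y' t) - (Iy * Sy - Iy) <= eps) by (rabs; lra).
    lra.
  - intros t Ht Hge. destruct (He12 t Ht) as [E1 E2].
    destruct (HG t Ht) as [G1 [G2 G3]].
    destruct (Ix_bounds N0 I0 t HI0 ltac:(lra) (proj1 Ht)) as [B1 B2].
    specialize (HN t Ht).
    set (Sy := fst (y t)) in *. set (Iy := snd (y t)) in *.
    set (Ixx := Ix N0 I0 t) in *. set (Nxx := Nx N0 t) in *.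
    set (dN := Sy + Iy - Nxx) in *.
    assert (Heq : snd (y' t) - Ixx * (Nxx - 1 - Ixx) =
      (snd (y' t) - (Iy * Sy - Iy)) + (Iy - Ixx) * (Sy + Iy - 1 - Iy - Ixx) + Ixx * dN)
      by (unfold dN; ring).
    rewrite Heq.
    assert (Hk : Sy + Iy - 1 - Iy - Ixx <= - c) by lra.
    assert (H1 : (Ixx - Iy) * (Sy + Iy - 1 - Iy - Ixx) <= (Ixx - Iy) * (- c))
      by (apply Rmult_le_compat_l; lra).
    assert (H2 : c * (5 * eps / c) <= c * (Ixx - Iy)) by (apply Rmult_le_compat_l; lra).
    assert (HdNb : - dN < 3 * eps) by (rabs; lra).
    assert (H3 : Ixx * (- dN) <= Ixx * (3 * eps)) by (apply Rmult_le_compat_l; lra).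
    assert (H4 : Ixx * (3 * eps) <= 1 * (3 * eps)) by (apply Rmult_le_compat_r; lra).
    assert (E2' : - eps <= snd (y' t) - (Iy * Sy - Iy)) by (rabs; lra).
    lra. }
intros t Ht. specialize (HN t Ht). specialize (HI t Ht).
unfold norm2, sub2, Xs; simpl.
replace ((3 + 5 / c) * eps) with (3 * eps + 5 * eps / c) by (field; lra).
apply Rmax_lub; rabs; lra.
Qed.

Theorem mainTheorem12 :
  (forall c : R, 0 < c < 1 -> cond_lip_shadowing sir_field (Gamma c)) /\
  ~ cond_lip_shadowing sir_field (Gamma 0).
Proof. split; [exact positive_part| exact negative_part]. Qed.
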